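(* Suppose a task class requires output precision $\Delta$ from minimal embedding perturbation $r$, so that $\Lambda(W)\ge\Delta/r$. Then the LAWS routing radius $\tau^* = (\delta-\varepsilon_{\mathrm{fit}}-2\Lambda(W)C_E)/(\Lambda(W)C_E)$ satisfies \[ \tau^* \le \frac{\delta - \varepsilon_{\mathrm{fit}} - 2(\Delta/r)C_E}{(\Delta/r)C_E}. \] If $\Delta > r(\delta-\varepsilon_{\mathrm{fit}})/(2C_E)$, then $\tau^*<0$ and no expert can be certified, so LAWS must always invoke the base model for such tasks.
   Context: $\Lambda(W)>0$ is the end-to-end Lipschitz constant of the transformer base model, $C_E = \max_{t,t'}\|E(t)-E(t')\|$ the embedding diameter, $\delta>0$ the LAWS quality threshold and $\varepsilon_{\mathrm{fit}}\ge0$ the expert fitting error, with $\delta - \varepsilon_{\mathrm{fit}} \ge 0$ implicitly. An expert with negative routing radius covers no query. *)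

(* Defs.v *)
From Stdlib Require Import Reals.
Open Scope R_scope.

Definition tau_star (delta eps_fit Lambda C_E : R) : R :=
  (delta - eps_fit - 2 * Lambda * C_E) / (Lambda * C_E).

Definition covers {X : Type} (dist : X -> X -> R) (c : X) (tau : R) (e : X) : Prop :=
  dist c e <= tau.

(* Main.v *)
Require Import Defs.
From Stdlib Require Import Reals Lra Psatz.
Open Scope R_scope.

Theorem mainTheorem13
  (Lambda C_E delta eps_fit Delta r : R)
  (hL : 0 < Lambda) (hC : 0 < C_E) (hd : 0 < delta) (he : 0 <= eps_fit)
  (hde : 0 <= delta - eps_fit) (hD : 0 < Delta) (hr : 0 < r)
  (hLow : Delta / r <= Lambda) :
  tau_star delta eps_fit Lambda C_E
    <= (delta - eps_fit - 2 * (Delta / r) * C_E) / ((Delta / r) * C_E)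
  /\ (r * (delta - eps_fit) / (2 * C_E) < Delta ->
      tau_star delta eps_fit Lambda C_E < 0
      /\ forall (X : Type) (dist : X -> X -> R),
           (forall x y, 0 <= dist x y) ->
           forall c e : X, ~ covers dist c (tau_star delta eps_fit Lambda C_E) e).
Proof.
  unfold tau_star.
  set (k := Delta / r).
  assert (hk : 0 < k) by (unfold k; apply Rdiv_lt_0_compat; lra).
  set (a := delta - eps_fit).
  assert (Ht : forall L, 0 < L -> (a - 2 * L * C_E) / (L * C_E) = a * / (L * C_E) - 2).
  { intros L HL. field. lra. }
  rewrite (Ht Lambda hL), (Ht k hk).
  assert (hLC : 0 < Lambda * C_E) by nra.
  assert (hkC : 0 < k * C_E) by nra.
  split.
  { assert (/ (Lambda * C_E) <= / (k * C_E)).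
    { apply Rinv_le_contravar; [exact hkC| apply Rmult_le_compat_r; [lra|unfold k; exact hLow]]. }
    assert (a * / (Lambda * C_E) <= a * / (k * C_E)) by (apply Rmult_le_compat_l; [unfold a; lra|assumption]).
    lra. }
  intros H.
  assert (H1 : r * a < Delta * (2 * C_E)).
  { apply Rmult_lt_compat_r with (r := 2 * C_E) in H; [|lra].
    replace (r * a / (2 * C_E) * (2 * C_E)) with (r * a) in H by (field; lra). exact H. }
  assert (H2 : a < k * (2 * C_E)).
  { apply Rmult_lt_compat_r with (r := / r) in H1; [|apply Rinv_0_lt_compat; lra].
    unfold k. replace (r * a * / r) with a in H1 by (field; lra).
    replace (Delta / r * (2 * C_E)) with (Delta * (2 * C_E) * / r) by (field; lra). exact H1. }
  assert (hkL : k <= Lambda) by (unfold k; exact hLow).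
  assert (H3 : a < 2 * (Lambda * C_E)) by nra.
  assert (H4 : a * / (Lambda * C_E) < 2).
  { apply Rmult_lt_compat_r with (r := / (Lambda * C_E)) in H3; [|apply Rinv_0_lt_compat; lra].
    replace (2 * (Lambda * C_E) * / (Lambda * C_E)) with 2 in H3 by (field; lra). exact H3. }
  split; [lra|].
  intros X dist hpos c e hc. unfold covers in hc.
  specialize (hpos c e).
  assert (a * / (Lambda * C_E) - 2 = (delta - eps_fit - 2 * Lambda * C_E) / (Lambda * C_E)) by (rewrite Ht; [reflexivity|lra]).
  unfold a in *. lra.
Qed.
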